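(* Let $M$ be a von Neumann algebra acting on a Hilbert space $H$ and let $a, b \in [0,1]_M$ be strict in $M$. Then: (1) $a^{1/2}$ is strict in $M$; (2) if $ab = ba$, then $ab$ is strict in $M$.
   Context: $[0,1]_M = \{x \in M : 0 \le x \le 1\}$, and $\mathcal{P}(M)$ is the set of projections of $M$. For $x \in [0,1]_M$ define $s(x) = \sup\{q \in \mathcal{P}(M) : q \le x\}$ and $n(x) = \sup\{q \in \mathcal{P}(M) : qx = 0\}$; $x$ is called strict in $M$ if $s(x) = 0$ and $n(x) = 0$. *)

(* Defs.v *)
From mathcomp Require Import all_boot all_order all_algebra.
From mathcomp Require Import reals complex.
Set Implicit Arguments. Unset Strict Implicit. Unset Printing Implicit Defensive.
Import Order.TTheory GRing.Theory Num.Theory.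
Local Open Scope ring_scope.

Record hilbert (R : realType) := Hilbert {
  hvec :> lmodType R[i];
  hip : hvec -> hvec -> R[i];
  hip_linear : forall (a : R[i]) (x1 x2 y : hvec),
      hip (a *: x1 + x2) y = a * hip x1 y + hip x2 y;
  hip_conj : forall x y : hvec, hip y x = (hip x y)^*;
  hip_ge0 : forall x : hvec, 0 <= hip x x;
  hip_eq0 : forall x : hvec, hip x x = 0 -> x = 0;
  hip_complete : forall u : nat -> hvec,
      (forall e : R[i], 0 < e -> exists N : nat, forall m n : nat,
          (N <= m)%N -> (N <= n)%N -> hip (u m - u n) (u m - u n) < e) ->
      exists l : hvec, forall e : R[i], 0 < e -> exists N : nat, forall n : nat,
          (N <= n)%N -> hip (u n - l) (u n - l) < e
}.

Section Ops.
Variables (R : realType) (H : hilbert R).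

Definition op := H -> H.

Definition adjoint (T S : op) := forall x y : H, hip (T x) y = hip x (S y).

(* bounded operators on H: linear maps having an adjoint
   (equivalent to boundedness by Hellinger--Toeplitz) *)
Definition is_bop (T : op) :=
  (forall (a : R[i]) (x y : H), T (a *: x + y) = a *: T x + T y) /\
  exists S, adjoint T S.

Definition commutant (S : op -> Prop) : op -> Prop :=
  fun T => is_bop T /\ forall X, S X -> T \o X = X \o T.

Definition von_neumann (M : op -> Prop) :=
  (forall T, M T -> is_bop T) /\
  (forall T S, M T -> adjoint T S -> M S) /\
  M = commutant (commutant M).

Definition zero_op : op := fun _ => 0.

Definition op_le (x y : op) := forall v : H, hip (x v) v <= hip (y v) v.

Definition is_proj (M : op -> Prop) (q : op) :=
  M q /\ q \o q = q /\ adjoint q q.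

Definition unit_interval (M : op -> Prop) (x : op) :=
  M x /\ op_le zero_op x /\ op_le x id.

Definition proj_sup (M : op -> Prop) (P : op -> Prop) (p : op) :=
  is_proj M p /\
  (forall q, is_proj M q -> P q -> op_le q p) /\
  (forall r, is_proj M r -> (forall q, is_proj M q -> P q -> op_le q r) ->
     op_le p r).

(* s(x) = 0 and n(x) = 0 *)
Definition strict (M : op -> Prop) (x : op) :=
  proj_sup M (fun q => op_le q x) zero_op /\
  proj_sup M (fun q => q \o x = zero_op) zero_op.

End Ops.

(* Main.v *)
Require Import Defs.
From mathcomp Require Import all_boot all_order all_algebra.
From mathcomp Require Import reals complex.
From mathcomp Require Import ring lra.
From mathcomp Require classical_sets.
From Stdlib Require Import ClassicalEpsilon FunctionalExtensionality.
Set Implicit Arguments. Unset Strict Implicit. Unset Printing Implicit Defensive.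
Import Order.TTheory GRing.Theory Num.Theory.
Local Open Scope ring_scope.
Local Open Scope complex_scope.
Local Open Scope ring_scope.
Notation Re := complex.Re.
Notation Im := complex.Im.
Section Basics.
Variables (R : realType) (H : hilbert R).
Local Notation C := R[i].
Local Notation ip := (@hip R H).
Implicit Types x y z : H.

Lemma ipDl x y z : ip (x + y) z = ip x z + ip y z.
Proof. have := hip_linear 1 x y z. rewrite scale1r mul1r. by []. Qed.
Lemma ip0l z : ip 0 z = 0.
Proof. have := ipDl 0 0 z; rewrite addr0 => /eqP; rewrite -subr_eq subrr eq_sym => /eqP //. Qed.
Lemma ipZl (a : C) x z : ip (a *: x) z = a * ip x z.
Proof. have := hip_linear a x 0 z. by rewrite !addr0 ip0l addr0. Qed.
Lemma ipNl x z : ip (- x) z = - ip x z.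
Proof. by rewrite -scaleN1r ipZl mulN1r. Qed.
Lemma ipBl x y z : ip (x - y) z = ip x z - ip y z.
Proof. by rewrite ipDl ipNl. Qed.
Lemma ipDr x y z : ip z (x + y) = ip z x + ip z y.
Proof. by rewrite hip_conj ipDl rmorphD /= -!hip_conj. Qed.
Lemma ipZr (a : C) x z : ip z (a *: x) = a^* * ip z x.
Proof. by rewrite hip_conj ipZl rmorphM /= -!hip_conj. Qed.
Lemma ip0r z : ip z 0 = 0.
Proof. by rewrite hip_conj ip0l conjC0. Qed.
Lemma ipNr x z : ip z (- x) = - ip z x.
Proof. by rewrite hip_conj ipNl rmorphN /= -!hip_conj. Qed.
Lemma ipBr x y z : ip z (x - y) = ip z x - ip z y.
Proof. by rewrite ipDr ipNr. Qed.
Lemma ip_real x : ip x x \is Num.real.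
Proof. exact: ger0_real (hip_ge0 x). Qed.
Lemma ip_eq x y : (forall w, ip x w = ip y w) -> x = y.
Proof. by move=> h; apply/eqP; rewrite -subr_eq0; apply/eqP/hip_eq0; rewrite ipBl h subrr. Qed.
Lemma ip_eqr x y : (forall w, ip w x = ip w y) -> x = y.
Proof. by move=> h; apply: ip_eq => w; rewrite hip_conj h -hip_conj. Qed.
End Basics.
Section Real.
Variable R : realType.
Local Notation C := R[i].

Lemma ge0_C (z : C) : 0 <= z -> z = (Re z)%:C.
Proof. by move=> h; rewrite RRe_real // ger0_real. Qed.

Lemma quad (A N B : R) : 0 <= A -> 0 <= N -> 0 <= B ->
  (forall s, 0 <= A - 2 * s * N + s ^+ 2 * N * B) -> N <= A * B.
Proof.
move=> hA hN hB hs.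
have [N0|Npos] := eqVneq N 0; first by rewrite N0 mulr_ge0.
have Ngt : 0 < N by rewrite lt_neqAle eq_sym Npos hN.
have [B0|Bpos] := eqVneq B 0.
  have := hs ((A + 1) / (2 * N)).
  have -> : A - 2 * ((A + 1) / (2 * N)) * N + ((A + 1) / (2 * N)) ^+ 2 * N * B = -1.
    by rewrite B0; field; rewrite Npos.
  by rewrite oppr_ge0 ler10.
have Bgt : 0 < B by rewrite lt_neqAle eq_sym Bpos hB.
have := hs (B^-1).
have -> : A - 2 * B^-1 * N + B^-1 ^+ 2 * N * B = A - N / B.
  by field; rewrite Bpos.
by rewrite subr_ge0 ler_pdivrMr.
Qed.
End Real.
Section CS.
Variables (R : realType) (H : hilbert R).
Local Notation C := R[i].
Local Notation ip := (@hip R H).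
Implicit Types x y z : H.

Definition lin (T : op H) := forall (a : C) x y, T (a *: x + y) = a *: T x + T y.
Definition posop (T : op H) := lin T /\ adjoint T T /\ forall v, 0 <= ip (T v) v.

Section Lin.
Variables (T : op H) (hT : lin T).
Lemma lin0 : T 0 = 0.
Proof. have h := hT 1 0 0; rewrite !scale1r addr0 in h. by apply: (addrI (T 0)); rewrite addr0 -h. Qed.
Lemma linD x y : T (x + y) = T x + T y.
Proof. by have := hT 1 x y; rewrite !scale1r. Qed.
Lemma linZ (a : C) x : T (a *: x) = a *: T x.
Proof. by have := hT a x 0; rewrite !addr0 lin0 addr0. Qed.
Lemma linN x : T (- x) = - T x.
Proof. by rewrite -scaleN1r linZ scaleN1r. Qed.
Lemma linB x y : T (x - y) = T x - T y.
Proof. by rewrite linD linN. Qed.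
End Lin.

Lemma CSgen (T : op H) x y : posop T ->
  `|ip (T x) y| ^+ 2 <= ip (T x) x * ip (T y) y.
Proof.
move=> [hl [had hp]].
set z := ip (T x) y; set A := ip (T x) x; set B := ip (T y) y.
have hw : ip (T y) x = z^*.
  by rewrite had hip_conj.
have key s : 0 <= A - 2 * s%:C * `|z| ^+ 2 + s%:C ^+ 2 * `|z| ^+ 2 * B.
  have := hp (x - (s%:C * z) *: y).
  rewrite linB // linZ // ipBl !ipBr !ipZl !ipZr hw -/A -/B -/z.
  rewrite normCK rmorphM /=.
  have -> : (s%:C)^* = s%:C :> C by exact: conjc_real.
  move=> h; apply: le_trans h _; rewrite le_eqVlt; apply/orP; left; apply/eqP; ring.
have hA : 0 <= A by exact: hp.
have hB : 0 <= B by exact: hp.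
have hN : 0 <= `|z| ^+ 2 by rewrite exprn_ge0.
rewrite (ge0_C hA) (ge0_C hB) (ge0_C hN) -rmorphM lecR.
apply: quad; rewrite -?ler0c -?ge0_C //.
move=> s; rewrite -ler0c; move: (key s).
rewrite {1}(ge0_C hA) {1}(ge0_C hB) {1 2}(ge0_C hN).
congr (_ <= _); rewrite !rmorphD !rmorphN !rmorphM rmorph_nat /=; ring.
Qed.

End CS.
Section Pos.
Variables (R : realType) (H : hilbert R).
Local Notation C := R[i].
Local Notation ip := (@hip R H).
Implicit Types x y z : H.

Lemma posop_id : posop (@id H).
Proof. by split; [move=> ? ? ?|split; [move=> ? ?|exact: hip_ge0]]. Qed.

Lemma CS x y : `|ip x y| ^+ 2 <= ip x x * ip y y.
Proof. exact: (CSgen x y posop_id). Qed.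

Lemma selfadj_of_real (T : op H) : lin T -> (forall v, ip (T v) v \is Num.real) ->
  adjoint T T.
Proof.
move=> hl hr.
have e v : ip (T v) v = ip v (T v) by rewrite [RHS]hip_conj conj_Creal.
move=> x y.
have h1 := e (x + y); have h2 := e (x + 'i *: y).
rewrite (linD hl) !ipDl !ipDr (e x) (e y) in h1.
rewrite (linD hl) (linZ hl) !ipDl !ipDr !ipZl !ipZr (e x) (e y) conjCi in h2.
move: h1 h2.
set P := ip x (T x); set Q := ip y (T y).
set a := ip (T x) y; set b := ip (T y) x; set c := ip x (T y); set d := ip y (T x).
move=> h1 h2.
have : 2 * 'i * (a - c) = 'i * ((P + a + (b + Q)) - (P + c + (d + Q))) -
   ((P + - 'i * a + ('i * b + 'i * (- 'i * Q))) - (P + - 'i * c + ('i * d + 'i * (- 'i * Q)))).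
  by ring.
rewrite h1 h2 !subrr mulr0 subr0 => /eqP; rewrite !mulf_eq0 pnatr_eq0 (negbTE (@neq0Ci _)) /= subr_eq0.
by move/eqP.
Qed.

Lemma posop_of (T : op H) : is_bop T -> op_le (@zero_op R H) T -> posop T.
Proof.
move=> [hl _] hle.
have hp v : 0 <= ip (T v) v by have := hle v; rewrite /zero_op ip0l.
split=> //; split=> //; apply: selfadj_of_real => // v; exact: ger0_real.
Qed.
End Pos.
Section Key.
Variables (R : realType) (H : hilbert R).
Local Notation C := R[i].
Local Notation ip := (@hip R H).
Implicit Types x y z : H.

Lemma norm_eq0 (v : H) : `|ip v v| ^+ 2 <= 0 -> v = 0.
Proof.
move=> h; apply: hip_eq0.
have : `|ip v v| ^+ 2 == 0 by rewrite eq_le h exprn_ge0.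
by rewrite expf_eq0 /= normr_eq0 => /eqP.
Qed.

Lemma posop_ker (T : op H) v : posop T -> ip (T v) v = 0 -> T v = 0.
Proof.
move=> hT h0; apply: norm_eq0.
by have := CSgen v (T v) hT; rewrite h0 mul0r.
Qed.

Lemma contr (T : op H) v : posop T -> (forall w, ip (T w) w <= ip w w) ->
  ip (T v) (T v) <= ip (T v) v.
Proof.
move=> hT h1.
have hCS := CSgen v (T v) hT.
have hN : 0 <= ip (T v) (T v) := hip_ge0 _.
have hA : 0 <= ip (T v) v := hT.2.2 v.
have hB : ip (T (T v)) (T v) <= ip (T v) (T v) := h1 (T v).
rewrite ger0_norm // in hCS.
have [N0|Npos] := eqVneq (ip (T v) (T v)) 0; first by rewrite N0.
have Ngt : 0 < ip (T v) (T v) by rewrite lt_neqAle eq_sym Npos hN.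
rewrite -(ler_pM2r Ngt) -expr2.
apply: (le_trans hCS); exact: ler_wpM2l.
Qed.

Lemma key_le (a q : op H) : posop a -> (forall v, ip (a v) v <= ip v v) ->
  lin q -> adjoint q q -> q \o q = q ->
  (forall w, ip (q w) (q w) <= ip (a (q w)) (q w)) -> op_le q a.
Proof.
move=> ha ha1 hql hqa hqq hw.
have [hal [haa hap]] := ha.
pose T := fun v => v - a v.
have hT : posop T.
  split; first by move=> c x y; rewrite /T (linD hal) (linZ hal) scalerBr opprD addrACA.
  split; first by move=> x y; rewrite /T ipBl ipBr haa.
  by move=> v; rewrite /T ipBl subr_ge0.
have hfix w : a (q w) = q w.
  apply/eqP; rewrite eq_sym -subr_eq0; apply/eqP.
  apply: (posop_ker (T := T)) => //; apply/eqP; rewrite eq_le hT.2.2 andbT.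
  by rewrite /T ipBl subr_le0 hw.
have qq w : q (q w) = q w by have := congr1 (fun f => f w) hqq.
move=> w; set u := w - q w.
have ew : w = q w + u by rewrite /u addrC subrK.
have hqw : ip (q w) (q w) = ip (q w) w by rewrite hqa qq -hqa.
have -> : a w = q w + a u by rewrite {1}ew (linD hal) hfix.
rewrite ipDl lerDl {1}ew ipDr.
have -> : ip (a u) (q w) = 0.
  by rewrite haa hfix /u ipBl hqw -hqa subrr.
by rewrite add0r hap.
Qed.
End Key.
Section NN.
Variables (R : realType) (H : hilbert R).
Local Notation C := R[i].
Local Notation ip := (@hip R H).
Implicit Types x y z u : H.

Definition nn y : R := Re (ip y y).
Lemma nnE y : ip y y = (nn y)%:C.
Proof. exact: ge0_C (hip_ge0 y). Qed.
Lemma nn_ge0 y : 0 <= nn y.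
Proof. by rewrite -ler0c -nnE hip_ge0. Qed.

Lemma ReM (t : R) (z : C) : Re (t%:C * z) = t * Re z.
Proof. by case: z => a b; rewrite /= mul0r subr0. Qed.
Lemma ReJ (z : C) : Re z^* = Re z.
Proof. by case: z. Qed.
Lemma ReD (z w : C) : Re (z + w) = Re z + Re w.
Proof. by case: z; case: w. Qed.
Lemma ReN (z : C) : Re (- z) = - Re z.
Proof. by case: z. Qed.
Lemma ReC (t : R) : Re t%:C = t.
Proof. by []. Qed.

Lemma nn_expand u y (t : R) :
  nn (u - t%:C *: y) = nn u - 2 * t * Re (ip u y) + t ^+ 2 * nn y.
Proof.
rewrite /nn ipBl !ipBr !ipZl !ipZr.
have -> : (t%:C)^* = t%:C :> C by exact: conjc_real.
rewrite [ip y u]hip_conj.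
rewrite !(ReD, ReN) !(ReM t) ReJ; ring.
Qed.

Lemma nnZ (t : R) y : nn (t%:C *: y) = t ^+ 2 * nn y.
Proof.
rewrite /nn ipZl ipZr.
have -> : (t%:C)^* = t%:C :> C by exact: conjc_real.
by rewrite !ReM mulrA expr2.
Qed.

Lemma paral x y : nn (x + y) + nn (x - y) = 2 * nn x + 2 * nn y.
Proof.
rewrite /nn !ipDl !ipDr !ipNl !ipNr !(ReD, ReN); ring.
Qed.

Lemma nnN y : nn (- y) = nn y.
Proof. by rewrite /nn ipNl ipNr opprK. Qed.

Lemma nn_sym x y : nn (x - y) = nn (y - x).
Proof. by rewrite -nnN opprB. Qed.

Lemma CSR x y : (Re (ip x y)) ^+ 2 <= nn x * nn y.
Proof.
have := CS x y; rewrite -add_Re2_Im2 !nnE -rmorphM lecR => h.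
apply: le_trans h; rewrite lerDl; exact: sqr_ge0.
Qed.

Lemma CSR2 x y : (Re (ip x y)) ^+ 2 + (Im (ip x y)) ^+ 2 <= nn x * nn y.
Proof. by have := CS x y; rewrite -add_Re2_Im2 !nnE -rmorphM lecR. Qed.

Lemma nn_eq0 y : nn y = 0 -> y = 0.
Proof. by move=> h; apply: hip_eq0; rewrite nnE h. Qed.
End NN.
Section RealAux.
Variable R : realType.
Local Notation C := R[i].
Lemma ReNi (z : C) : Re (- 'i * z) = Im z.
Proof. case: z => a b; rewrite /=; lra. Qed.
Lemma inv_mono (N n : nat) : (N <= n)%N -> n.+1%:R^-1 <= N.+1%:R^-1 :> R.
Proof. by move=> h; rewrite lef_pV2 ?posrE // ler_nat ltnS. Qed.
Lemma inv_pos (n : nat) : 0 < n.+1%:R^-1 :> R.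
Proof. by rewrite invr_gt0 ltr0Sn. Qed.
Lemma z_eq0 (z : C) : Re z ^+ 2 + Im z ^+ 2 <= 0 -> z = 0.
Proof.
case: z => a b /= h.
have a0 : a = 0 by nra.
have b0 : b = 0 by nra.
by rewrite a0 b0.
Qed.
Lemma small (y c : R) : 0 <= c -> (forall e, 0 < e -> y <= e * c) -> y <= 0.
Proof.
move=> hc h; rewrite leNgt; apply/negP => ypos.
have hc1 : 0 < c + 1 by lra.
have := h (y / (c + 1)) (divr_gt0 ypos hc1).
have -> : y / (c + 1) * c = y - y / (c + 1) by field; lra.
have : 0 < y / (c + 1) by exact: divr_gt0.
lra.
Qed.
End RealAux.
Section Arith.
Variable R : realType.
Lemma ort_arith (c B t a b ru r nk nu e dd : R) :
  0 < c -> 0 <= B -> 0 < t -> t * (2 * (B + 1)) = c ->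
  a <= b -> b < t * c / 2 ->
  dd <= nu - 2 * t * ru + t ^+ 2 * B ->
  nu < dd + a ->
  r ^+ 2 <= nk * B -> nk < e -> 0 < e -> e * (B + 1) = (c / 4) ^+ 2 ->
  c = ru + r -> False.
Proof.
move=> cpos hB tpos ht hab hb hv hdn hr hnn epos he ec.
have h1 : t * B <= c / 2 by nra.
have h2 : t ^+ 2 * B <= t * (c / 2) by rewrite expr2 -mulrA; apply: ler_wpM2l => //; lra.
have h3 : r ^+ 2 <= (c / 4) ^+ 2.
  rewrite -he; apply: (le_trans hr); apply: (@le_trans _ _ (e * B)).
    by apply: ler_wpM2r => //; lra.
  nra.
have h4 : r <= c / 4.
  have : 0 < c / 4 by lra.
  move: h3; move: (c / 4) => q; rewrite !expr2 => h3 hq; nra.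
have h5 : t * r <= t * (c / 4) by apply: ler_wpM2l => //; lra.
have h6 : 0 < t * c by nra.
nra.
Qed.
Lemma time_arith (c B : R) : 0 < B + 1 -> c / (2 * (B + 1)) * (2 * (B + 1)) = c.
Proof. by move=> h; field; lra. Qed.
Lemma e_arith (c B : R) : 0 < B + 1 -> (c / 4) ^+ 2 / (B + 1) * (B + 1) = (c / 4) ^+ 2.
Proof. by move=> h; field; lra. Qed.
End Arith.
Section Proj.
Variables (R : realType) (H : hilbert R) (X : op H).
Hypotheses (hXl : lin X) (hXa : adjoint X X).
Local Notation C := R[i].
Local Notation ip := (@hip R H).

Lemma K_comb (a : C) x y : X x = 0 -> X y = 0 -> X (a *: x + y) = 0.
Proof. by move=> hx hy; rewrite hXl hx hy scaler0 addr0. Qed.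

Lemma decomp (v : H) : exists k, X k = 0 /\ forall k', X k' = 0 -> ip (v - k) k' = 0.
Proof.
pose S := (fun r : R => exists k, X k = 0 /\ r = nn (v - k)).
have hS : classical_sets.has_inf S.
  split; first by exists (nn (v - 0)); exists 0; split => //; exact: (lin0 hXl).
  by exists 0 => r [k [_ ->]]; exact: nn_ge0.
set dd := inf S.
have lb k : X k = 0 -> dd <= nn (v - k).
  by move=> hk; apply: (ge_inf hS.2); exists k.
have ad n : exists k, X k = 0 /\ nn (v - k) < dd + n.+1%:R^-1.
  have [r [k [hk ->]] hr] := inf_adherent (inv_pos R n) hS.
  by exists k.
pose kn n := proj1_sig (constructive_indefinite_description _ (ad n)).
have hk n : X (kn n) = 0 /\ nn (v - kn n) < dd + n.+1%:R^-1.
  exact: (proj2_sig (constructive_indefinite_description _ (ad n))).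
have cb n m : nn (kn m - kn n) <= 2 * n.+1%:R^-1 + 2 * m.+1%:R^-1.
  have [hkn hdn] := hk n; have [hkm hdm] := hk m.
  have := paral (v - kn n) (v - kn m).
  have e1 : (v - kn n) - (v - kn m) = kn m - kn n.
    by rewrite opprB addrC addrA subrK.
  rewrite e1.
  set mid := (2^-1)%:C *: (kn n + kn m).
  have hmid : X mid = 0 by rewrite /mid (linZ hXl) (linD hXl) hkn hkm addr0 scaler0.
  have e2 : (v - kn n) + (v - kn m) = 2%:C *: (v - mid).
    rewrite /mid scalerBr scalerA -rmorphM mulfV ?pnatr_eq0 // scale1r.
    by rewrite rmorph_nat scaler_nat mulr2n opprD addrACA.
  rewrite e2 nnZ.
  have := lb _ hmid.
  have h4 : (2:R) ^+ 2 = 4 by rewrite expr2; lra.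
  rewrite h4 => h1 h2; move: hdn hdm h1 h2; move: (n.+1%:R^-1) (m.+1%:R^-1) => a b; lra.
have [k hlim] : exists k, forall e : C, 0 < e -> exists N : nat, forall n : nat,
    (N <= n)%N -> ip (kn n - k) (kn n - k) < e.
  apply: hip_complete => e he.
  have hre : 0 < Re e by rewrite -ltcR -ge0_C // ltW.
  have [N hN] := ltr_add_invr (divr_gt0 hre (ltr0Sn R 3)).
  exists N => m n hm hn.
  rewrite nnE (ge0_C (ltW he)) ltcR.
  have := cb n m; have := inv_mono R hm; have := inv_mono R hn.
  move: hN; rewrite add0r.
  move: (N.+1%:R^-1) (n.+1%:R^-1) (m.+1%:R^-1) => a b c.
  have : Re e / 3.+1%:R * 4 = Re e by rewrite (_ : 3.+1%:R = 4 :> R) //; field.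
  lra.
have hl eps : 0 < eps -> exists N : nat, forall n : nat, (N <= n)%N -> nn (kn n - k) < eps.
  move=> he; have [|N hN] := hlim eps%:C; first by rewrite ltcR.
  by exists N => n hn; have := hN n hn; rewrite nnE ltcR.
have hXk : X k = 0.
  have z0 w : ip (X k) w = 0.
    apply: z_eq0; apply: (small (nn_ge0 (X w))) => eps he.
    have [N hN] := hl eps he.
    have [hkN _] := hk N.
    have e : ip (X k) w = ip (k - kn N) (X w).
      by rewrite hXa ipBl -(hXa (kn N)) hkN ip0l subr0.
    rewrite e; apply: (le_trans (CSR2 _ _)); apply: ler_wpM2r; first exact: nn_ge0.
    by rewrite nn_sym; apply: ltW; apply: hN.
  by apply: hip_eq0; apply: z0.
have ortR k' : X k' = 0 -> Re (ip (v - k) k') <= 0.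
  move=> hk'; rewrite leNgt; apply/negP => cpos.
  set c := Re (ip (v - k) k') in cpos.
  set B := nn k'.
  have hB : 0 <= B := nn_ge0 k'.
  have hB1 : 0 < B + 1 by rewrite ltr_wpDl.
  set t := c / (2 * (B + 1)).
  have ht : t * (2 * (B + 1)) = c by exact: time_arith.
  have tpos : 0 < t by rewrite /t divr_gt0 // mulr_gt0.
  have [N1 hN1] := ltr_add_invr (divr_gt0 (mulr_gt0 tpos cpos) (ltr0Sn R 1)).
  have epos : 0 < (c / 4) ^+ 2 / (B + 1).
    by rewrite divr_gt0 // exprn_gt0 // divr_gt0.
  have [N2 hN2] := hl _ epos.
  pose n := maxn N1 N2.
  have [hkn hdn] := hk n.
  have hv := lb _ (K_comb t%:C hk' hkn).
  rewrite opprD addrA addrAC nn_expand -/B in hv.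
  have hr := CSR (kn n - k) k'.
  have hnn := hN2 n (leq_maxr _ _).
  have hinv := inv_mono R (leq_maxl N1 N2 : (N1 <= n)%N).
  have ec : c = Re (ip (v - kn n) k') + Re (ip (kn n - k) k').
    by rewrite /c -ReD -ipDl addrA subrK.
  have hq := e_arith c hB1.
  rewrite add0r in hN1.
  exact: (ort_arith cpos hB tpos ht hinv hN1 hv hdn hr hnn epos hq ec).
exists k; split => // k' hk'.
have hN y : X y = 0 -> X (- y) = 0 by move=> hy; rewrite (linN hXl) hy oppr0.
have hI : X ('i *: k') = 0 by rewrite (linZ hXl) hk' scaler0.
have r1 := ortR _ hk'.
have r2 := ortR _ (hN _ hk').
have r3 := ortR _ hI.
have r4 := ortR _ (hN _ hI).
rewrite ipNr ReN in r2.
rewrite ipZr conjCi ReNi in r3.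
rewrite ipNr ReN ipZr conjCi ReNi in r4.
apply: z_eq0.
have -> : Re (ip (v - k) k') = 0 by apply/eqP; rewrite eq_le r1 -oppr_le0 r2.
have -> : Im (ip (v - k) k') = 0 by apply/eqP; rewrite eq_le r3 -oppr_le0 r4.
by rewrite expr2 mulr0 addr0.
Qed.

End Proj.
Section Inj.
Variables (R : realType) (H : hilbert R) (M : op H -> Prop).
Hypothesis hM : von_neumann M.
Local Notation C := R[i].
Local Notation ip := (@hip R H).

Lemma inj_strict (X : op H) (hX : M X) (hXp : posop X) (sX : strict M X) v :
  X v = 0 -> v = 0.
Proof.
have [hXl [hXa _]] := hXp.
pose P v := proj1_sig (constructive_indefinite_description _ (decomp hXl hXa v)).
have hP w : X (P w) = 0 /\ forall k', X k' = 0 -> ip (w - P w) k' = 0.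
  exact: (proj2_sig (constructive_indefinite_description _ (decomp hXl hXa w))).
have uniq w k : X k = 0 -> (forall k', X k' = 0 -> ip (w - k) k' = 0) -> P w = k.
  move=> hk hort; have [h1 h2] := hP w.
  apply/eqP; rewrite -subr_eq0; apply/eqP; apply: hip_eq0.
  have Xd : X (P w - k) = 0 by rewrite (linB hXl) h1 hk subrr.
  have e : P w - k = (w - k) - (w - P w) by rewrite [RHS]addrC opprB addrA subrK.
  by rewrite {1}e ipBl hort // h2 // subrr.
have Pl : lin P.
  move=> a x y; apply: uniq; first by apply: K_comb => //; [exact: (hP x).1 | exact: (hP y).1].
  move=> k' hk'.
  have -> : a *: x + y - (a *: P x + P y) = a *: (x - P x) + (y - P y).
    by rewrite scalerBr opprD addrACA.
  by rewrite hip_linear (hP x).2 // (hP y).2 // mulr0 addr0.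
have Pa : adjoint P P.
  move=> x y.
  have ey : y = P y + (y - P y) by rewrite addrC subrK.
  have ex : x = P x + (x - P x) by rewrite addrC subrK.
  rewrite {1}ey [in RHS]ex ipDr ipDl.
  rewrite [ip (P x) (y - P y)]hip_conj (hP y).2; last exact: (hP x).1.
  by rewrite (hP x).2; [rewrite conjC0 !addr0 | exact: (hP y).1].
have PK k : X k = 0 -> P k = k by move=> hk; apply: uniq => // k' _; rewrite subrr ip0l.
have PP : P \o P = P.
  by apply: functional_extensionality => w /=; apply: PK; exact: (hP w).1.
have MP : M P.
  have [hMb [_ hMc]] := hM.
  rewrite hMc; split; first by split; [exact: Pl | exists P].
  move=> Y [[hYl [Ys hYs]] hYc].
  have XY w : Y (X w) = X (Y w) by have := congr1 (fun f => f w) (hYc X hX).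
  have Ysk k : X k = 0 -> X (Ys k) = 0.
    move=> hk; apply: ip_eqr => w.
    by rewrite ip0r -hXa -hYs XY hXa hk ip0r.
  apply: functional_extensionality => w /=; apply: uniq.
    by rewrite -XY (hP w).1 (lin0 hYl).
  move=> k' hk'; rewrite -(linB hYl) hYs (hP w).2 //; exact: Ysk.
have PX : P \o X = @zero_op R H.
  apply: functional_extensionality => w /=; apply: uniq; first exact: (lin0 hXl).
  by move=> k' hk'; rewrite subr0 hXa hk' ip0r.
have hproj : is_proj M P by split; [exact: MP | split].
have hle := sX.2.2.1 P hproj PX.
move=> hv; apply: hip_eq0; apply/eqP; rewrite eq_le hip_ge0 andbT.
by have := hle v; rewrite PK // /zero_op ip0l.
Qed.
End Inj.
Section Main.
Variables (R : realType) (H : hilbert R) (M : op H -> Prop).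
Hypothesis hM : von_neumann M.
Local Notation C := R[i].
Local Notation ip := (@hip R H).
Local Notation Z := (@zero_op R H).

Lemma proj_lin q : is_proj M q -> lin q.
Proof. by move=> [hq _]; exact: (hM.1 q hq).1. Qed.

Lemma proj_idem q v : is_proj M q -> q (q v) = q v.
Proof. by move=> [_ [hqq _]]; have := congr1 (fun f => f v) hqq. Qed.

Lemma proj_ge0 q v : is_proj M q -> 0 <= ip (q v) v.
Proof.
move=> hq; have [_ [_ hqa]] := hq.
by rewrite -(proj_idem v hq) hqa hip_ge0.
Qed.

Lemma proj_sup_zero (P : op H -> Prop) : M Z ->
  (forall q, is_proj M q -> P q -> op_le q Z) -> proj_sup M P Z.
Proof.
move=> hZ h; split.
  split=> //; split; first by apply: functional_extensionality => v.
  by move=> x y; rewrite /zero_op ip0l ip0r.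
split=> // r hr _ v; rewrite /zero_op ip0l; exact: proj_ge0.
Qed.

Lemma sq_div (x z : C) : 0 <= x -> 0 <= z -> x * x <= z * x -> x <= z.
Proof.
move=> hx hz h.
have [->|xn] := eqVneq x 0; first by [].
have xp : 0 < x by rewrite lt_neqAle eq_sym xn hx.
by rewrite -(ler_pM2r xp).
Qed.

Lemma qle (a q : op H) : unit_interval M a -> strict M a -> is_proj M q ->
  (forall v, q v = v -> ip v v <= ip (a v) v) -> op_le q Z.
Proof.
move=> [haM [ha0 ha1]] sa hq h.
apply: sa.1.2.1 => //.
have hap := posop_of (hM.1 a haM) ha0.
have [hqM [hqq hqa]] := hq.
apply: key_le => //; first exact: (proj_lin hq).
by move=> w; apply: h; exact: (proj_idem w hq).
Qed.

End Main.

Theorem lemma2p3 (R : realType) (H : hilbert R) (M : op H -> Prop)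
  (hM : von_neumann M) (a b : op H)
  (ha : unit_interval M a) (hb : unit_interval M b)
  (sa : strict M a) (sb : strict M b) :
  (forall r : op H, is_bop r -> op_le (@zero_op R H) r -> r \o r = a ->
     strict M r) /\
  (a \o b = b \o a -> strict M (a \o b)).
Proof.
have hZ : M (@zero_op R H) by have [[[]]] := sa.
have [haM [ha0 ha1]] := ha; have [hbM [hb0 hb1]] := hb.
have hap := posop_of (hM.1 a haM) ha0.
have hbp := posop_of (hM.1 b hbM) hb0.
split.
  move=> r hrb hr0 hra.
  have hrp := posop_of hrb hr0.
  split; apply: proj_sup_zero => // q hq.
    move=> hqr; apply: (qle hM ha sa hq) => v hqv.
    have h1 : hip v v <= hip (r v) v by have := hqr v; rewrite hqv.
    have hv0 : 0 <= hip v v := hip_ge0 v.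
    have hrv0 : 0 <= hip (r v) v := le_trans hv0 h1.
    have hCS := CS (r v) v.
    rewrite ger0_norm // -hrp.2.1 in hCS.
    have e : r (r v) = a v by rewrite -hra.
    rewrite e in hCS.
    apply: sq_div => //; first exact: hap.2.2.
    apply: le_trans hCS; rewrite expr2; exact: ler_pM.
  move=> hqr; apply: sa.2.2.1 => //.
  apply: functional_extensionality => w /=.
  by rewrite -hra /=; have := congr1 (fun f => f (r w)) hqr.
move=> hab.
split; apply: proj_sup_zero => // q hq.
  move=> hqab; apply: (qle hM ha sa hq) => v hqv.
  have h1 : hip v v <= hip (a (b v)) v by have := hqab v; rewrite hqv.
  have hv0 : 0 <= hip v v := hip_ge0 v.
  have hX0 : 0 <= hip (a (b v)) v := le_trans hv0 h1.
  have e : hip (a (b v)) v = hip (b v) (a v) by rewrite hap.2.1.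
  have hCS := CS (b v) (a v).
  rewrite -e ger0_norm // in hCS.
  have c1 := contr v hbp hb1.
  have c2 := contr v hap ha1.
  have hbv1 : hip (b v) (b v) <= hip v v := le_trans c1 (hb1 v).
  apply: sq_div => //; first exact: hap.2.2.
  apply: (le_trans (y := hip (a (b v)) v * hip (a (b v)) v)); first exact: ler_pM.
  rewrite -expr2; apply: (le_trans hCS); rewrite [X in _ <= X]mulrC.
  by apply: ler_pM => //; exact: hip_ge0.
move=> hq0 v.
have qy y : q y = 0.
  have hb0' : b (a (q y)) = 0.
    apply: ip_eqr => x.
    rewrite ip0r -hbp.2.1 -hap.2.1 -hq.2.2.
    by have := congr1 (fun f => f x) hq0; rewrite /= => ->; rewrite /zero_op ip0l.
  apply: (inj_strict hM haM hap sa).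
  exact: (inj_strict hM hbM hbp sb).
by rewrite qy /zero_op ip0l.
Qed.
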